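(* Let $Id_{Gr}\colon Gr\to Gr$ be the identity functor of the category of groups. There is a natural isomorphism of functors $Gr\to Gr$ $$\Gamma_1\colon G^{ab}\xrightarrow{\simeq}T_1(Id_{Gr})(G)$$ such that $\Gamma_1(\bar g)=t_1(g)$ for $g\in G$.
   Context: Notation. - $G^{ab}=G/[G,G]$, with $\bar g$ the class of $g$. - For a reduced functor $F\colon Gr\to Gr$: $cr_2F(G,G)=\ker(F(G*G)\to F(G)\times F(G))$, induced by the two retractions of the free product $G*G$. - $T_1F(G)$ is the quotient of $F(G)$ by the image of $cr_2F(G,G)\subseteq F(G*G)$ under $F(\nabla)$ (a normal subgroup), where $\nabla\colon G*G\to G$ is the folding map; $t_1$ is the projection. *)

(* Defs.v *)
(* abstract (possibly infinite) groups via mathcomp's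
   [groupType] from boot/monoid.v (NOT the finite groups of fingroup). *)
From HB Require Import structures.
From mathcomp Require Import all_boot.

Set Implicit Arguments.
Unset Strict Implicit.
Unset Printing Implicit Defensive.


Local Open Scope group_scope.

Definition is_hom (G H : groupType) (f : G -> H) : Prop :=
  forall x y : G, f (x * y) = f x * f y.

Definition is_subgroup (G : groupType) (S : G -> Prop) : Prop :=
  S 1 /\ (forall x y, S x -> S y -> S (x * y)) /\ (forall x, S x -> S x^-1).

Definition gen_subgroup (G : groupType) (S : G -> Prop) : G -> Prop :=
  fun x => forall T : G -> Prop, is_subgroup T -> (forall y, S y -> T y) -> T x.

Definition commutator_subgroup (G : groupType) : G -> Prop :=
  gen_subgroup (fun c : G => exists x y : G, c = commg x y).

Definition is_free_product (G1 G2 P : groupType) (i1 : G1 -> P) (i2 : G2 -> P)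
  : Prop :=
  is_hom i1 /\ is_hom i2 /\
  forall (K : groupType) (f1 : G1 -> K) (f2 : G2 -> K),
    is_hom f1 -> is_hom f2 ->
    exists f : P -> K,
      (is_hom f /\ (forall x, f (i1 x) = f1 x) /\ (forall x, f (i2 x) = f2 x)) /\
      (forall f' : P -> K, is_hom f' ->
         (forall x, f' (i1 x) = f1 x) -> (forall x, f' (i2 x) = f2 x) ->
         forall p, f' p = f p).

Definition GG_data (G P : groupType) (i1 i2 : G -> P) (r1 r2 nabla : P -> G)
  : Prop :=
  is_free_product i1 i2 /\
  is_hom r1 /\ (forall x, r1 (i1 x) = x) /\ (forall x, r1 (i2 x) = 1) /\
  is_hom r2 /\ (forall x, r2 (i1 x) = 1) /\ (forall x, r2 (i2 x) = x) /\
  is_hom nabla /\ (forall x, nabla (i1 x) = x) /\ (forall x, nabla (i2 x) = x).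

(* cr_2 Id (G,G) = ker (G*G -> G x G) *)
Definition cr2_Id (G P : groupType) (r1 r2 : P -> G) : P -> Prop :=
  fun p => r1 p = 1 /\ r2 p = 1.

(* image of cr_2 Id(G,G) under Id(nabla) = nabla : the subgroup killed by t_1 *)
Definition T1_kernel (G P : groupType) (r1 r2 nabla : P -> G) : G -> Prop :=
  fun g => exists p, cr2_Id r1 r2 p /\ nabla p = g.

Definition is_quotient (G Q : groupType) (N : G -> Prop) (q : G -> Q) : Prop :=
  is_hom q /\ (forall y : Q, exists x : G, q x = y) /\
  (forall x : G, q x = 1 <-> N x).

Definition is_abelianization (G A : groupType) (ab : G -> A) : Prop :=
  is_quotient (@commutator_subgroup G) ab.

Definition is_T1Id (G P : groupType) (r1 r2 nabla : P -> G)
  (T : groupType) (t1 : G -> T) : Prop :=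
  is_quotient (T1_kernel r1 r2 nabla) t1.

Definition Gamma1_spec (G A T : groupType) (ab : G -> A) (t1 : G -> T)
  (Gamma : A -> T) : Prop :=
  is_hom Gamma /\ forall g : G, Gamma (ab g) = t1 g.

(* Main.v *)
Require Import Defs.
From HB Require Import structures.
From mathcomp Require Import all_boot.

Local Open Scope group_scope.

Section Helpers.

Lemma hom1 (G H : groupType) (f : G -> H) : is_hom f -> f 1 = 1.
Proof.
move=> hf; apply: (@mulgI _ (f 1)); by rewrite -hf !mulg1.
Qed.

Lemma homV (G H : groupType) (f : G -> H) : is_hom f -> forall x, f x^-1 = (f x)^-1.
Proof.
move=> hf x; symmetry; apply: mulg1_eq; by rewrite -hf mulgV hom1.
Qed.

Lemma homR (G H : groupType) (f : G -> H) : is_hom f ->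
  forall x y, f [~ x, y] = [~ f x, f y].
Proof.
move=> hf x y; rewrite /commg /conjg !hf !homV //.
Qed.

Lemma ab_comm (G A : groupType) (ab : G -> A) : is_abelianization ab ->
  forall a b : A, a * b = b * a.
Proof.
move=> [hab [surj ker]] a b.
have [x <-] := surj a; have [y <-] := surj b.
rewrite -!hab (commgC x y) hab.
have -> : ab [~ x, y] = 1.
  apply/ker => T _ HT; apply: HT; by exists x, y.
by rewrite mulg1.
Qed.

Lemma quot_iso (G A T : groupType) (q1 : G -> A) (q2 : G -> T) :
  is_hom q1 -> (forall a, exists x, q1 x = a) ->
  is_hom q2 -> (forall t, exists x, q2 x = t) ->
  (forall x, q1 x = 1 <-> q2 x = 1) ->
  exists Gamma : A -> T, (is_hom Gamma /\ forall g, Gamma (q1 g) = q2 g)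
                          /\ bijective Gamma.
Proof.
move=> h1 s1 h2 s2 K.
have E12 : forall x y, q1 x = q1 y -> q2 x = q2 y.
  move=> x y e; apply: divg1_eq; rewrite -homV // -h2; apply/K.
  by rewrite h1 homV // e mulgV.
have E21 : forall x y, q2 x = q2 y -> q1 x = q1 y.
  move=> x y e; apply: divg1_eq; rewrite -homV // -h1; apply/K.
  by rewrite h2 homV // e mulgV.
have s1' : forall a, exists x, q1 x == a by move=> a; have [x e] := s1 a; exists x; apply/eqP.
have s2' : forall t, exists x, q2 x == t by move=> t; have [x e] := s2 t; exists x; apply/eqP.
pose Gam a := q2 (xchoose (s1' a)).
pose Del t := q1 (xchoose (s2' t)).
have GamE : forall g, Gam (q1 g) = q2 g.
  move=> g; apply: E12; exact/eqP/(xchooseP (s1' (q1 g))).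
have DelE : forall g, Del (q2 g) = q1 g.
  move=> g; apply: E21; exact/eqP/(xchooseP (s2' (q2 g))).
exists Gam; split; first split => //.
- move=> a b; have [x <-] := s1 a; have [y <-] := s1 b.
  by rewrite -h1 !GamE h2.
- exists Del.
  + move=> a; have [x <-] := s1 a; by rewrite GamE DelE.
  + move=> t; have [x <-] := s2 t; by rewrite DelE GamE.
Qed.

Lemma kernels_eq (G P : groupType) (i1 i2 : G -> P) (r1 r2 nabla : P -> G)
  (A : groupType) (ab : G -> A) :
  GG_data i1 i2 r1 r2 nabla -> is_abelianization ab ->
  forall g, commutator_subgroup g <-> T1_kernel r1 r2 nabla g.
Proof.
move=> [[hi1 [hi2 FP]] [hr1 [r1i1 [r1i2 [hr2 [r2i1 [r2i2 [hn [ni1 ni2]]]]]]]]] Hab g.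
split.
- move=> Hc; apply: Hc.
  + split; [|split].
    * exists 1; split; [split; exact: hom1|exact: hom1].
    * move=> x y [p [[p1 p2] <-]] [q [[q1 q2] <-]]; exists (p * q).
      by rewrite /cr2_Id hr1 hr2 hn p1 p2 q1 q2 !mulg1.
    * move=> x [p [[p1 p2] <-]]; exists p^-1.
      by rewrite /cr2_Id !homV // p1 p2 invg1.
  + move=> y [x [z ->]]; exists [~ i1 x, i2 z].
    rewrite /cr2_Id !homR // r1i1 r1i2 r2i1 r2i2 ni1 ni2 commg1 comm1g.
    by [].
- move=> [p [[p1 p2] <-]].
  have [hab [_ ker]] := Hab.
  apply/ker.
  have Acomm := @ab_comm _ _ _ Hab.
  pose h p := ab (r1 p) * ab (r2 p).
  have hh : is_hom h.
    move=> x y; rewrite /h hr1 hr2 !hab -!mulgA; congr (_ * _).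
    by rewrite !mulgA (Acomm (ab (r1 y)) (ab (r2 x))).
  have hhab : is_hom (fun q => ab (nabla q)) by move=> x y; rewrite hn hab.
  have [f [_ U]] := FP A ab ab hab hab.
  have e1 := U _ hh.
  have e2 := U _ hhab.
  have -> : ab (nabla p) = h p.
    have c1 : forall x, h (i1 x) = ab x.
      by move=> x; rewrite /h r1i1 r2i1 hom1 // mulg1.
    have c2 : forall x, h (i2 x) = ab x.
      by move=> x; rewrite /h r1i2 r2i2 hom1 // mul1g.
    have d1 : forall x, ab (nabla (i1 x)) = ab x by move=> x; rewrite ni1.
    have d2 : forall x, ab (nabla (i2 x)) = ab x by move=> x; rewrite ni2.
    by rewrite (e2 d1 d2 p) (e1 c1 c2 p).
  by rewrite /h p1 p2 hom1 // mulg1.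
Qed.

End Helpers.

Theorem proposition2p2 :
  (* for every group G: Gamma_1 exists and is an isomorphism *)
  (forall (G P : groupType) (i1 i2 : G -> P) (r1 r2 nabla : P -> G),
     GG_data i1 i2 r1 r2 nabla ->
     forall (A : groupType) (ab : G -> A), is_abelianization ab ->
     forall (T : groupType) (t1 : G -> T), is_T1Id r1 r2 nabla t1 ->
     exists Gamma : A -> T, Gamma1_spec ab t1 Gamma /\ bijective Gamma)
  /\
  (* naturality: for every homomorphism f : G -> H, with f^ab and T_1(Id)(f)
     the induced maps, Gamma_1(H) o f^ab = T_1(Id)(f) o Gamma_1(G) *)
  (forall (G P : groupType) (i1 i2 : G -> P) (r1 r2 nabla : P -> G),
     GG_data i1 i2 r1 r2 nabla ->
   forall (H P' : groupType) (j1 j2 : H -> P') (s1 s2 nabla' : P' -> H),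
     GG_data j1 j2 s1 s2 nabla' ->
   forall (AG : groupType) (abG : G -> AG), is_abelianization abG ->
   forall (AH : groupType) (abH : H -> AH), is_abelianization abH ->
   forall (TG : groupType) (tG : G -> TG), is_T1Id r1 r2 nabla tG ->
   forall (TH : groupType) (tH : H -> TH), is_T1Id s1 s2 nabla' tH ->
   forall (f : G -> H), is_hom f ->
   forall (fab : AG -> AH), (forall g, fab (abG g) = abH (f g)) ->
   forall (fT : TG -> TH), (forall g, fT (tG g) = tH (f g)) ->
   forall (GammaG : AG -> TG) (GammaH : AH -> TH),
     Gamma1_spec abG tG GammaG -> Gamma1_spec abH tH GammaH ->
     forall a : AG, GammaH (fab a) = fT (GammaG a)).
Proof.
split.
- move=> G P i1 i2 r1 r2 nabla HD A ab Hab T t1 Ht.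
  have KE := @kernels_eq _ _ _ _ _ _ _ _ _ HD Hab.
  have [ha [sa ka]] := Hab; have [ht [st kt]] := Ht.
  apply: quot_iso => // x; split.
  + by move/ka/KE/kt.
  + by move/kt/KE/ka.
- move=> G P i1 i2 r1 r2 nabla _ H P' j1 j2 s1 s2 nabla' _ AG abG HG AH abH _
    TG tG _ TH tH _ f _ fab Efab fT EfT GammaG GammaH [_ EG] [_ EH] a.
  have [_ [sG _]] := HG; have [g <-] := sG a.
  by rewrite Efab EH EG EfT.
Qed.
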